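(* Let $P\in\Delta_{\mathcal{T},\mathcal{X},\mathcal{Y}}$, let $Q^*$ be a minimizer of $I_Q(T:X\mid Y)$ over $Q\in\Delta_P$, and let $(t,x,y)\in\operatorname{supp}(\Delta_P)$. If $Q^*(t,x,y)=0$, then $Q^*(X=x,Y=y)=0$; consequently $Q^*(t',x,y)=0$ for all $t'\in\mathcal{T}$.
   Context: $T,X,Y$ are random variables with finite state spaces $\mathcal{T},\mathcal{X},\mathcal{Y}$; $\Delta_{\mathcal{T},\mathcal{X},\mathcal{Y}}$ is the set of all joint distributions on $\mathcal{T}\times\mathcal{X}\times\mathcal{Y}$. For $P\in\Delta_{\mathcal{T},\mathcal{X},\mathcal{Y}}$, $\Delta_P=\{Q\in\Delta_{\mathcal{T},\mathcal{X},\mathcal{Y}}: Q(X=x,T=t)=P(X=x,T=t),\ Q(Y=y,T=t)=P(Y=y,T=t)\ \forall x,y,t\}$ and $\operatorname{supp}(\Delta_P)=\bigcup_{Q\in\Delta_P}\operatorname{supp}(Q)$. $I_Q(T:X\mid Y)$ is the conditional mutual information under $Q$. *)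

(* Defs.v *)
From HB Require Import structures.
From mathcomp Require Import all_boot.
From Stdlib Require Import Reals.
Set Implicit Arguments. Unset Strict Implicit. Unset Printing Implicit Defensive.

Local Open Scope R_scope.

Lemma Rplus_assoc' : associative Rplus.
Proof. by move=> a b c; rewrite Rplus_assoc. Qed.
HB.instance Definition _ := Monoid.isComLaw.Build R R0 Rplus
  Rplus_assoc' Rplus_comm Rplus_0_l.

Definition rsum (I : finType) (F : I -> R) : R := \big[Rplus/R0]_(i : I) F i.

Section Info.
Variables (T X Y : finType).

Definition jfun := T -> X -> Y -> R.

Definition is_dist (Q : jfun) : Prop :=
  (forall t x y, 0 <= Q t x y) /\
  rsum (fun t => rsum (fun x => rsum (fun y => Q t x y))) = 1.

Definition margTX (Q : jfun) (t : T) (x : X) : R := rsum (fun y => Q t x y).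
Definition margTY (Q : jfun) (t : T) (y : Y) : R := rsum (fun x => Q t x y).
Definition margXY (Q : jfun) (x : X) (y : Y) : R := rsum (fun t => Q t x y).
Definition margY (Q : jfun) (y : Y) : R :=
  rsum (fun t => rsum (fun x => Q t x y)).

Definition condMI (Q : jfun) : R :=
  rsum (fun t => rsum (fun x => rsum (fun y =>
    if Req_EM_T (Q t x y) 0 then 0
    else Q t x y * ln (Q t x y * margY Q y / (margTY Q t y * margXY Q x y))))).

Definition DeltaP (P Q : jfun) : Prop :=
  is_dist Q /\
  (forall t x, margTX Q t x = margTX P t x) /\
  (forall t y, margTY Q t y = margTY P t y).

Definition suppDeltaP (P : jfun) (t : T) (x : X) (y : Y) : Prop :=
  exists Q, DeltaP P Q /\ Q t x y <> 0.

Definition is_CMI_minimizer (P Qs : jfun) : Prop :=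
  DeltaP P Qs /\ forall Q, DeltaP P Q -> condMI Qs <= condMI Q.

End Info.

(* Main.v *)
Require Import Defs.
From mathcomp Require Import all_boot.
From Stdlib Require Import Reals Lra Classical.
Set Implicit Arguments. Unset Strict Implicit.
Local Open Scope R_scope.

Lemma rsum_ext (I : finType) (F G : I -> R) : (forall i, F i = G i) -> rsum F = rsum G.
Proof. move=> h; apply: eq_bigr => i _; exact: h. Qed.

Lemma rsum_add (I : finType) (F G : I -> R) : rsum (fun i => F i + G i) = rsum F + rsum G.
Proof. by rewrite /rsum big_split. Qed.

Lemma rsum_scal (I : finType) c (F : I -> R) : rsum (fun i => c * F i) = c * rsum F.
Proof. rewrite /rsum; elim/big_rec2: _ => [|i a b _ ->]; ring. Qed.

Lemma rsum_sub (I : finType) (F G : I -> R) : rsum (fun i => F i - G i) = rsum F - rsum G.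
Proof.
have := rsum_add (fun i => F i - G i) G.
rewrite (@rsum_ext _ (fun i => F i - G i + G i) F); last by move=> i; ring.
lra.
Qed.

Lemma rsum_le (I : finType) (F G : I -> R) : (forall i, F i <= G i) -> rsum F <= rsum G.
Proof. move=> h; rewrite /rsum; elim/big_rec2: _ => [|i a b _ hab]; [lra|]. have := h i; lra. Qed.

Lemma rsum_ge0 (I : finType) (F : I -> R) : (forall i, 0 <= F i) -> 0 <= rsum F.
Proof. move=> h; rewrite /rsum; elim/big_rec: _ => [|i a _ ha]; [lra|]. have := h i; lra. Qed.

Lemma rsum_single (I : finType) (F : I -> R) i0 : (forall i, 0 <= F i) -> F i0 <= rsum F.
Proof.
move=> h; rewrite /rsum (bigD1 i0) //=.
have : 0 <= \big[Rplus/R0]_(i | i != i0) F i.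
  elim/big_rec: _ => [|i a _ ha]; [lra|]. have := h i; lra.
lra.
Qed.

Lemma rsum_exch (I J : finType) (F : I -> J -> R) :
  rsum (fun i => rsum (fun j => F i j)) = rsum (fun j => rsum (fun i => F i j)).
Proof. by rewrite /rsum exchange_big. Qed.

Definition phi (u : R) := u * ln u.

Lemma ln_le_sub1 z : 0 < z -> ln z <= z - 1.
Proof. move=> hz; have := exp_ineq1_le (ln z); rewrite exp_ln //; lra. Qed.

Lemma tangent u m : 0 <= u -> 0 < m -> phi m + (ln m + 1) * (u - m) <= phi u.
Proof.
rewrite /phi => hu hm.
case: (Req_dec u 0) => [->|hu0].
  rewrite Rmult_0_l; lra.
have hu' : 0 < u by lra.
have hz : 0 < m / u by apply: Rdiv_lt_0_compat; lra.
have := ln_le_sub1 hz.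
rewrite /Rdiv ln_mult ?ln_Rinv; try (apply: Rinv_0_lt_compat); try lra.
move=> hl.
have : u * (ln m - ln u) <= u * (m * / u - 1) by apply: Rmult_le_compat_l; lra.
have -> : u * (m * / u - 1) = m - u by field; lra.
lra.
Qed.

Lemma phi_scal e b : 0 < e -> 0 <= b -> phi (e * b) = e * phi b + e * ln e * b.
Proof.
rewrite /phi => he hb.
case: (Req_dec b 0) => [->|hb0]; first by rewrite !Rmult_0_r Rmult_0_l; ring.
rewrite ln_mult; lra || ring.
Qed.

Lemma conv_phi e a b : 0 < e < 1 -> 0 <= a -> 0 <= b ->
  phi ((1 - e) * a + e * b) <= (1 - e) * phi a + e * phi b.
Proof.
move=> he ha hb.
set m := (1 - e) * a + e * b.
have hm0 : 0 <= m by rewrite /m; nra.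
case: (Req_dec m 0) => hm.
  have ha0 : a = 0 by rewrite /m in hm; nra.
  have hb0 : b = 0 by rewrite /m in hm; nra.
  rewrite hm ha0 hb0 /phi; lra.
have hmp : 0 < m by lra.
have h1 := tangent ha hmp. have h2 := tangent hb hmp.
have : (1 - e) * (phi m + (ln m + 1) * (a - m)) + e * (phi m + (ln m + 1) * (b - m)) = phi m
  by rewrite /m; ring.
nra.
Qed.

Definition ind (a b : R) := if Req_EM_T a 0 then b else 0.
Definition Mc (a b : R) := if Req_EM_T a 0 then phi b else (ln a + 1) * (b - a).

Lemma phi0 : phi 0 = 0.
Proof. rewrite /phi; ring. Qed.

Lemma E1 e a b : 0 < e < 1 -> 0 <= a -> 0 <= b ->
  phi ((1 - e) * a + e * b) - phi a <= e * (phi b - phi a) + e * ln e * ind a b.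
Proof.
move=> he ha hb; rewrite /ind; case: Req_EM_T => [ha0'|ha0] /=; [rewrite ha0'|].
  have -> : (1 - e) * 0 + e * b = e * b by ring.
  rewrite phi_scal; try lra. rewrite phi0; lra.
have := conv_phi he ha hb; lra.
Qed.

Lemma E2 e a b : 0 < e < 1 -> 0 <= a -> 0 <= b ->
  e * Mc a b + e * ln e * ind a b <= phi ((1 - e) * a + e * b) - phi a.
Proof.
move=> he ha hb; rewrite /ind /Mc; case: Req_EM_T => [ha0'|ha0] /=; [rewrite ha0'|].
  have -> : (1 - e) * 0 + e * b = e * b by ring.
  rewrite phi_scal; try lra. rewrite phi0; lra.
have hap : 0 < a by lra.
have hu : 0 <= (1 - e) * a + e * b by nra.
have := tangent hu hap.
have -> : (1 - e) * a + e * b - a = e * (b - a) by ring.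
lra.
Qed.

Section Dec.
Variables (T X Y : finType).
Implicit Types (Q : T -> X -> Y -> R).

Definition Fc Q := rsum (fun x : X => rsum (fun y : Y =>
   rsum (fun t : T => phi (Q t x y)) - phi (margXY Q x y))).
Definition Hc Q := rsum (fun t : T => rsum (fun y : Y =>
   margTY Q t y * ln (margY Q y) - margTY Q t y * ln (margTY Q t y))).

Lemma rsum_scalr (I : finType) c (F : I -> R) : rsum (fun i => F i * c) = rsum F * c.
Proof. rewrite (@rsum_ext _ _ (fun i => c * F i)); last by move=> i; ring.
rewrite rsum_scal; ring. Qed.

Lemma rsum3_exch (F : T -> X -> Y -> R) :
  rsum (fun t => rsum (fun x => rsum (fun y => F t x y))) =
  rsum (fun x => rsum (fun y => rsum (fun t => F t x y))).
Proof.
rewrite rsum_exch; apply: rsum_ext => x; exact: rsum_exch.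
Qed.

Lemma term_eq Q t x y : (forall t x y, 0 <= Q t x y) ->
  (if Req_EM_T (Q t x y) 0 then 0
    else Q t x y * ln (Q t x y * margY Q y / (margTY Q t y * margXY Q x y)))
  = phi (Q t x y) + Q t x y * ln (margY Q y) - Q t x y * ln (margTY Q t y)
     - Q t x y * ln (margXY Q x y).
Proof.
move=> hQ; case: Req_EM_T => [hq0|hq] /=; first by rewrite hq0 phi0; ring.
have hqp : 0 < Q t x y by have := hQ t x y; lra.
have h1 : Q t x y <= margTY Q t y by exact: (@rsum_single _ (fun x => Q t x y) x (fun i => hQ t i y)).
have h2 : Q t x y <= margXY Q x y by exact: (@rsum_single _ (fun t => Q t x y) t (fun i => hQ i x y)).
have h3 : margTY Q t y <= margY Q y.
  apply: (@rsum_single _ (fun t => margTY Q t y) t) => i; apply: rsum_ge0 => j; exact: hQ.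
rewrite /Rdiv ln_mult; last (apply: Rinv_0_lt_compat; apply: Rmult_lt_0_compat); try lra.
  rewrite ln_Rinv; last (apply: Rmult_lt_0_compat; lra).
  rewrite ln_mult; try lra. rewrite ln_mult; try lra. rewrite /phi; ring.
apply: Rmult_lt_0_compat; lra.
Qed.

Lemma condMI_dec Q : (forall t x y, 0 <= Q t x y) -> condMI Q = Fc Q + Hc Q.
Proof.
move=> hQ; rewrite /condMI.
rewrite (@rsum_ext _ _ (fun t => rsum (fun x => rsum (fun y =>
   (phi (Q t x y) - Q t x y * ln (margXY Q x y)) +
   (Q t x y * ln (margY Q y) - Q t x y * ln (margTY Q t y)))))); last first.
  move=> t; apply: rsum_ext => x; apply: rsum_ext => y; rewrite term_eq //; ring.
rewrite (@rsum_ext _ _ (fun t => rsum (fun x => rsum (fun y =>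
   (phi (Q t x y) - Q t x y * ln (margXY Q x y)))) +
   rsum (fun x => rsum (fun y =>
   (Q t x y * ln (margY Q y) - Q t x y * ln (margTY Q t y)))))); last first.
  move=> t; rewrite -rsum_add; apply: rsum_ext => x; by rewrite -rsum_add.
rewrite rsum_add rsum3_exch; congr (_ + _).
  rewrite /Fc; apply: rsum_ext => x; apply: rsum_ext => y.
  rewrite rsum_sub rsum_scalr /phi; done.
rewrite /Hc; apply: rsum_ext => t; rewrite rsum_exch; apply: rsum_ext => y.
by rewrite rsum_sub !rsum_scalr.
Qed.

Lemma Hc_eq Q1 Q2 : (forall t y, margTY Q1 t y = margTY Q2 t y) -> Hc Q1 = Hc Q2.
Proof.
move=> h; rewrite /Hc /margY; apply: rsum_ext => t; apply: rsum_ext => y.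
rewrite h.
have -> : rsum (fun t0 => rsum (fun x => Q1 t0 x y)) = rsum (fun t0 => rsum (fun x => Q2 t0 x y)).
  apply: rsum_ext => t0; exact: h.
done.
Qed.
End Dec.

Section Main.
Variables (T X Y : finType).
Implicit Types (Q : T -> X -> Y -> R).

Definition Qe e (Qs Q : T -> X -> Y -> R) := fun t x y => (1 - e) * Qs t x y + e * Q t x y.

Lemma rsum_mix (I : finType) e (F G : I -> R) :
  rsum (fun i => (1 - e) * F i + e * G i) = (1 - e) * rsum F + e * rsum G.
Proof. by rewrite rsum_add !rsum_scal. Qed.

Lemma mix_Delta P Qs Q e : 0 < e < 1 -> DeltaP P Qs -> DeltaP P Q -> DeltaP P (Qe e Qs Q).
Proof.
move=> he [[hs0 hs1] [hs2 hs3]] [[hq0 hq1] [hq2 hq3]].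
split; [split|split].
- move=> t x y; rewrite /Qe; have := hs0 t x y; have := hq0 t x y; nra.
- rewrite /Qe.
  rewrite (@rsum_ext _ _ (fun t => (1 - e) * rsum (fun x => rsum (fun y => Qs t x y))
      + e * rsum (fun x => rsum (fun y => Q t x y)))); last first.
    move=> t; rewrite -rsum_mix; apply: rsum_ext => x; by rewrite rsum_mix.
  rewrite rsum_mix hs1 hq1; ring.
- move=> t x; rewrite /margTX /Qe rsum_mix.
  have := hs2 t x; have := hq2 t x; rewrite /margTX => -> ->; ring.
- move=> t y; rewrite /margTY /Qe rsum_mix.
  have := hs3 t y; have := hq3 t y; rewrite /margTY => -> ->; ring.
Qed.

Definition Kc Qs Q := rsum (fun x : X => rsum (fun y : Y =>
  rsum (fun t : T => phi (Q t x y) - phi (Qs t x y)) - Mc (margXY Qs x y) (margXY Q x y))).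
Definition Ec Qs Q := rsum (fun x : X => rsum (fun y : Y =>
  rsum (fun t : T => ind (Qs t x y) (Q t x y)) - ind (margXY Qs x y) (margXY Q x y))).

Lemma Fc_bound Qs Q e : 0 < e < 1 -> (forall t x y, 0 <= Qs t x y) -> (forall t x y, 0 <= Q t x y) ->
  Fc (Qe e Qs Q) - Fc Qs <= e * Kc Qs Q + e * ln e * Ec Qs Q.
Proof.
move=> he hs hq.
have hA : forall x y, 0 <= margXY Qs x y by move=> x y; apply: rsum_ge0 => t.
have hB : forall x y, 0 <= margXY Q x y by move=> x y; apply: rsum_ge0 => t.
rewrite /Fc /Kc /Ec -rsum_sub -!rsum_scal -rsum_add.
apply: rsum_le => x; rewrite -rsum_sub -!rsum_scal -rsum_add; apply: rsum_le => y.
have -> : margXY (Qe e Qs Q) x y = (1 - e) * margXY Qs x y + e * margXY Q x y.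
  by rewrite /margXY /Qe rsum_mix.
have h2 := E2 he (hA x y) (hB x y).
have h1 : rsum (fun t => phi (Qe e Qs Q t x y)) - rsum (fun t => phi (Qs t x y)) <=
   e * rsum (fun t => phi (Q t x y) - phi (Qs t x y)) + e * ln e * rsum (fun t => ind (Qs t x y) (Q t x y)).
  rewrite -rsum_sub -!rsum_scal -rsum_add; apply: rsum_le => t.
  exact: E1 he (hs t x y) (hq t x y).
lra.
Qed.

Lemma ind_ge0 a b : 0 <= b -> 0 <= ind a b.
Proof. by rewrite /ind; case: Req_EM_T => _ /= ; lra. Qed.

Lemma Ec_xy_ge0 Qs Q x y : (forall t x y, 0 <= Qs t x y) -> (forall t x y, 0 <= Q t x y) ->
  0 <= rsum (fun t : T => ind (Qs t x y) (Q t x y)) - ind (margXY Qs x y) (margXY Q x y).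
Proof.
move=> hs hq.
rewrite {2}/ind; case: Req_EM_T => [hA|hA] /=.
  have ha : forall t, Qs t x y = 0.
    move=> t; have := @rsum_single _ (fun t => Qs t x y) t (fun i => hs i x y).
    rewrite -/(margXY Qs x y) hA; have := hs t x y; lra.
  rewrite (@rsum_ext _ _ (fun t => Q t x y)) /margXY; first lra.
  move=> t; rewrite ha /ind; case: Req_EM_T => //= h; lra.
have := @rsum_ge0 _ (fun t => ind (Qs t x y) (Q t x y)) (fun t => ind_ge0 (Qs t x y) (hq t x y)).
lra.
Qed.

Lemma Ec_ge Qs Q t0 x0 y0 : (forall t x y, 0 <= Qs t x y) -> (forall t x y, 0 <= Q t x y) ->
  Qs t0 x0 y0 = 0 -> margXY Qs x0 y0 <> 0 -> Q t0 x0 y0 <= Ec Qs Q.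
Proof.
move=> hs hq h0 hA.
have hE := fun x y => Ec_xy_ge0 x y hs hq.
apply: Rle_trans (@rsum_single _ _ x0 (fun x => rsum_ge0 (fun y => hE x y))).
apply: Rle_trans (@rsum_single _ _ y0 (fun y => hE x0 y)).
rewrite {2}/ind; case: Req_EM_T => //= _.
have := @rsum_single _ (fun t => ind (Qs t x0 y0) (Q t x0 y0)) t0
   (fun t => ind_ge0 (Qs t x0 y0) (hq t x0 y0)).
rewrite /= {1}/ind; case: Req_EM_T => //= _; lra.
Qed.

End Main.

Theorem mainTheorem5 (T X Y : finType) (P Qs : T -> X -> Y -> R)
  (hP : is_dist P) (hQs : is_CMI_minimizer P Qs)
  (t : T) (x : X) (y : Y) (hsupp : suppDeltaP P t x y)
  (h0 : Qs t x y = 0) :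
  margXY Qs x y = 0 /\ (forall t' : T, Qs t' x y = 0).
Proof.
case: hQs => hDs hmin.
have hs : forall t x y, 0 <= Qs t x y by case: hDs => [[]].
have hA : margXY Qs x y = 0.
  apply: NNPP => hA.
  case: hsupp => Q [hD hQ0].
  have hq : forall t x y, 0 <= Q t x y by case: hD => [[]].
  have hq0 : 0 < Q t x y by have := hq t x y; lra.
  set K := Kc Qs Q.
  set e := exp (- ((Rabs K + 1) / Q t x y)).
  have hpos : 0 < (Rabs K + 1) / Q t x y.
    apply: Rdiv_lt_0_compat => //; have := Rabs_pos K; lra.
  have he : 0 < e < 1.
    split; first exact: exp_pos.
    have hn : - ((Rabs K + 1) / Q t x y) < 0 by lra.
    have := exp_increasing _ _ hn; rewrite exp_0 /e; lra.
  have hle : ln e = - ((Rabs K + 1) / Q t x y) by rewrite /e ln_exp.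
  have hDe := mix_Delta he hDs hD.
  have hqe : forall t x y, 0 <= Qe e Qs Q t x y by case: hDe => [[]].
  have hm := hmin _ hDe.
  rewrite (condMI_dec hs) (condMI_dec hqe) in hm.
  have hH : Hc (Qe e Qs Q) = Hc Qs.
    apply: Hc_eq => t' y'. case: hDe => _ [_ ->]. by case: hDs => _ [_ ->].
  have hb := Fc_bound he hs hq.
  have hE := Ec_ge hs hq h0 hA.
  have hlneg : e * ln e <= 0.
    rewrite hle; have := Rmult_le_pos e ((Rabs K + 1) / Q t x y); lra.
  have h3 : e * ln e * Ec Qs Q <= e * ln e * Q t x y.
    have : 0 <= Ec Qs Q - Q t x y by lra. nra.
  have h4 : e * ln e * Q t x y = - e * (Rabs K + 1).
    rewrite hle; field; lra.
  have h5 : e * K <= e * Rabs K by apply: Rmult_le_compat_l; [lra|apply: Rle_abs].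
  rewrite -/K in hb. lra.
split => // t'.
have := @rsum_single _ (fun t => Qs t x y) t' (fun i => hs i x y).
rewrite -/(margXY Qs x y) hA; have := hs t' x y; lra.
Qed.
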